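(* Let $(\mathcal I,T)$ be a system of class $\mathcal{DRIS}(\gamma)$ for some $\gamma>0$. Then its block system belongs to the Good Class. Consequently $\mathcal{DRIS}=\bigcup_{\gamma>0}\mathcal{DRIS}(\gamma)\subset\mathcal{DRBGC}$.
   Context: Let $\mathcal I=[0,1]$. A binary dynamical system is given by $c\in]0,1[$ and two $C^2$ bijections, $a:[0,1]\to[0,c]$ and $b:[0,1]\to[c,1]$ (the inverse branches). The map $T$ equals $a^{-1}$ on $]0,c[$ and $b^{-1}$ on $]c,1[$. Class $\mathcal{DR}$: $a$ is increasing, $b$ is decreasing, $a(0)=0$, $a(1)=c$, $b(0)=1$, $b(1)=c$, $a'>0$ and $b'<0$ on $[0,1]$, and $a'(x)<1$, $b'(x)>-1$ for $x\in]0,1]$. Class $\mathcal{DRI}$: class $\mathcal{DR}$ with moreover $a'(0)=1$. Let $q(n)=a^n(1)$. Block system: for $m\ge1$, $\mathcal J_m=]q(m),q(m-1)[$ and $g_m=a^{m-1}\circ b$. The block map $\widehat T$ equals $g_m^{-1}$ on $\mathcal J_m$. Let $\mathcal G^n$ be the set of compositions $g_{m_1}\circ\cdots\circ g_{m_n}$. The block system is in the Good Class if: - (a) the Dirichlet series $\sum_{m\ge1}|\mathcal J_m|^s$ has abscissa of convergence $<1$; - (b) $\limsup_n\eta_n<1$, where $\eta_n=\sup\{|g'(x)|:g\in\mathcal G^n,x\in\mathcal I\}$; - (c) there is $L\ge1$ with $L^{-1}\le|g_m'(x)/g_m'(y)|\le L$ for all $m\ge1$ and $x,y\in\mathcal I$.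 $\mathcal{DRBGC}$ is the class of $\mathcal{DRI}$ systems whose block system is in the Good Class. $\mathcal{SV}_0^*$ denotes the set of positive functions $V\in C^1(]0,1])$ such that: - $V$ is slowly varying at $0$, i.e. $V(tx)/V(x)\to1$ as $x\to0^+$ for every $t>0$; - $xV'(x)/V(x)\to0$ as $x\to0^+$. For $\gamma>0$, $\mathcal{DRIS}(\gamma)$ is the class of $\mathcal{DRI}$ systems such that $a(x)=x-u(x)$, where $u\in C^2([0,1])$, $u(0)=u'(0)=0$, $u'(x)\in[0,1]$, and $u'(x)=x^\gamma V(x)$ on $]0,1]$ for some $V\in\mathcal{SV}_0^*$. *)

(* Defs.v *)
From Stdlib Require Import Reals List.
From Coquelicot Require Import Coquelicot.
Open Scope R_scope.

(* f is C^2 on [0,1]: realised as C^2 on an open neighbourhood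
   ]-eps, 1+eps[ of [0,1] (equivalent in dimension one, by extension). *)
Definition C2_on_01 (f : R -> R) : Prop :=
  exists eps : R, 0 < eps /\
    forall x, -eps < x < 1 + eps ->
      ex_derive f x /\ ex_derive (Derive f) x /\
      continuous (Derive (Derive f)) x.

(* f is C^1 on ]0,1]: C^1 on ]0, 1+eps[ for some eps > 0. *)
Definition C1_on_0_1 (f : R -> R) : Prop :=
  exists eps : R, 0 < eps /\
    forall x, 0 < x < 1 + eps -> ex_derive f x /\ continuous (Derive f) x.

Definition bij_on (f : R -> R) (lo0 hi0 lo1 hi1 : R) : Prop :=
  (forall x, lo0 <= x <= hi0 -> lo1 <= f x <= hi1) /\
  (forall y, lo1 <= y <= hi1 ->
     exists x, lo0 <= x <= hi0 /\ f x = y /\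
       forall x', lo0 <= x' <= hi0 -> f x' = y -> x' = x).

(* Class DR, given by c and the inverse branches a, b. *)
Definition is_DR (c : R) (a b : R -> R) : Prop :=
  0 < c < 1 /\
  C2_on_01 a /\ C2_on_01 b /\
  bij_on a 0 1 0 c /\ bij_on b 0 1 c 1 /\
  (forall x y, 0 <= x <= 1 -> 0 <= y <= 1 -> x < y -> a x < a y) /\
  (forall x y, 0 <= x <= 1 -> 0 <= y <= 1 -> x < y -> b y < b x) /\
  a 0 = 0 /\ a 1 = c /\ b 0 = 1 /\ b 1 = c /\
  (forall x, 0 <= x <= 1 -> 0 < Derive a x /\ Derive b x < 0) /\
  (forall x, 0 < x <= 1 -> Derive a x < 1 /\ -1 < Derive b x).

Definition is_DRI (c : R) (a b : R -> R) : Prop :=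
  is_DR c a b /\ Derive a 0 = 1.

Definition slowly_varying_0 (V : R -> R) : Prop :=
  forall t, 0 < t ->
    filterlim (fun x => V (t * x) / V x) (at_right 0) (locally 1).

Definition SV0_star (V : R -> R) : Prop :=
  (forall x, 0 < x <= 1 -> 0 < V x) /\
  C1_on_0_1 V /\
  slowly_varying_0 V /\
  filterlim (fun x => x * Derive V x / V x) (at_right 0) (locally 0).

Definition is_DRIS (gamma c : R) (a b : R -> R) : Prop :=
  is_DRI c a b /\
  exists u V : R -> R,
    (forall x, 0 <= x <= 1 -> a x = x - u x) /\
    C2_on_01 u /\ u 0 = 0 /\ Derive u 0 = 0 /\
    (forall x, 0 <= x <= 1 -> 0 <= Derive u x <= 1) /\
    SV0_star V /\
    (forall x, 0 < x <= 1 -> Derive u x = Rpower x gamma * V x).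

Definition q (a : R -> R) (n : nat) : R := Nat.iter n a 1.

Definition J_len (a : R -> R) (m : nat) : R := q a (m - 1)%nat - q a m.

Definition g (a b : R -> R) (m : nat) : R -> R :=
  fun x => Nat.iter (m - 1)%nat a (b x).

Definition g_comp (a b : R -> R) (l : list nat) : R -> R :=
  fold_right (fun m h => fun x => g a b m (h x)) (fun x => x) l.

Definition eta (a b : R -> R) (n : nat) : Rbar :=
  Lub_Rbar (fun y => exists (l : list nat) (x : R),
    length l = n /\ List.Forall (fun m => (1 <= m)%nat) l /\
    0 <= x <= 1 /\ y = Rabs (Derive (g_comp a b l) x)).

Definition Rbar_limsup (u : nat -> Rbar) : Rbar :=
  Inf_seq (fun N => Sup_seq (fun k => u (N + k)%nat)).

Definition abscissa_J (a : R -> R) : Rbar :=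
  Glb_Rbar (fun s => ex_series (fun k => Rpower (J_len a (S k)) s)).

Definition good_class (a b : R -> R) : Prop :=
  Rbar_lt (abscissa_J a) 1 /\
  Rbar_lt (Rbar_limsup (eta a b)) 1 /\
  (exists L : R, 1 <= L /\
     forall (m : nat) (x y : R), (1 <= m)%nat -> 0 <= x <= 1 -> 0 <= y <= 1 ->
       / L <= Rabs (Derive (g a b m) x / Derive (g a b m) y) <= L).

Definition is_DRBGC (c : R) (a b : R -> R) : Prop :=
  is_DRI c a b /\ good_class a b.

(* Main.v *)
Require Import Defs.
From Stdlib Require Import Reals List Lra Lia.
From Coquelicot Require Import Coquelicot.
Open Scope R_scope.

Fixpoint Pd (a da : R -> R) (n : nat) (y : R) : R :=
  match n with O => 1 | S n => da (Nat.iter n a y) * Pd a da n y end.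

Lemma q_S a n : q a (S n) = a (q a n).
Proof. reflexivity. Qed.

Lemma iter_derive (a da : R -> R) :
  (forall x, 0 <= x <= 1 -> 0 <= a x <= 1) ->
  (forall x, 0 <= x <= 1 -> is_derive a x (da x)) ->
  forall n y, 0 <= y <= 1 ->
    is_derive (Nat.iter n a) y (Pd a da n y) /\ 0 <= Nat.iter n a y <= 1.
Proof.
  intros Ha Hd n; induction n as [|n IH]; intros y Hy.
  - split; [|simpl; lra]. simpl.
    apply (is_derive_ext (fun x => x)); [reflexivity|]. auto_derive; auto.
  - destruct (IH y Hy) as [D1 R1]. split.
    + simpl. apply (is_derive_ext (fun x => a (Nat.iter n a x))); [reflexivity|].
      pose proof (is_derive_comp a (Nat.iter n a) y _ _ (Hd _ R1) D1) as H.
      simpl in H. unfold scal in H; simpl in H; unfold mult in H; simpl in H.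
      replace (da (Nat.iter n a y) * Pd a da n y) with (Pd a da n y * da (Nat.iter n a y)) by ring.
      exact H.
    + simpl. apply Ha; exact R1.
Qed.

Lemma Pd_bounds (a da : R -> R) :
  (forall x, 0 <= x <= 1 -> 0 <= a x <= 1) ->
  (forall x, 0 <= x <= 1 -> 0 < da x <= 1) ->
  forall n y, 0 <= y <= 1 -> 0 < Pd a da n y <= 1.
Proof.
  intros Ha Hd n; induction n as [|n IH]; intros y Hy; simpl; [lra|].
  assert (Hi : 0 <= Nat.iter n a y <= 1).
  { clear IH; induction n; simpl; [lra|]. apply Ha; auto. }
  destruct (Hd _ Hi) as [h1 h2]. destruct (IH y Hy) as [h3 h4].
  split; [apply Rmult_lt_0_compat; lra|].
  replace 1 with (1*1) by ring. apply Rmult_le_compat; lra.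
Qed.

Lemma iter_01 (a : R -> R) :
  (forall x, 0 <= x <= 1 -> 0 <= a x <= 1) ->
  forall n y, 0 <= y <= 1 -> 0 <= Nat.iter n a y <= 1.
Proof. intros Ha n; induction n; intros y Hy; simpl; auto. Qed.

Lemma Pd_pos (a da : R -> R) :
  (forall x, 0 <= x <= 1 -> 0 <= a x <= 1) ->
  (forall x, 0 <= x <= 1 -> 0 < da x) ->
  forall n y, 0 <= y <= 1 -> 0 < Pd a da n y.
Proof.
  intros Ha Hd n; induction n as [|n IH]; intros y Hy; simpl; [lra|].
  apply Rmult_lt_0_compat; auto. apply Hd, iter_01; auto.
Qed.


Lemma q_01 a : (forall x, 0 <= x <= 1 -> 0 <= a x <= 1) -> forall n, 0 <= q a n <= 1.
Proof. intros Ha n; induction n; [unfold q; simpl; lra|rewrite q_S; auto]. Qed.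

Lemma iter_in (a : R -> R) :
  (forall x, 0 <= x <= 1 -> 0 <= a x <= 1) ->
  (forall x y, 0 <= x <= 1 -> 0 <= y <= 1 -> x <= y -> a x <= a y) ->
  forall n y, q a 1 <= y <= 1 -> q a (S n) <= Nat.iter n a y <= q a n.
Proof.
  intros Ha Hm n; induction n as [|n IH]; intros y Hy.
  - unfold q in *; simpl in *; lra.
  - pose proof (q_01 a Ha (S n)) as Q1. pose proof (q_01 a Ha n) as Q2.
    destruct (IH y Hy) as [h1 h2].
    simpl Nat.iter. rewrite (q_S a (S n)). change (q a (S n)) with (a (q a n)) at 2. split; apply Hm; lra.
Qed.

Lemma distortion (a da : R -> R) (K : R) :
  0 <= K ->
  (forall x, 0 <= x <= 1 -> 0 <= a x <= 1) ->
  (forall x y, 0 <= x <= 1 -> 0 <= y <= 1 -> x <= y -> a x <= a y) ->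
  (forall x, 0 <= x <= 1 -> 0 < da x) ->
  (forall p r, 0 <= p <= 1 -> 0 <= r <= 1 -> da p <= da r * exp (K * Rabs (p - r))) ->
  forall n y z, q a 1 <= y <= 1 -> q a 1 <= z <= 1 ->
   Pd a da n y <= Pd a da n z * exp (K * (1 - q a n)).
Proof.
  intros HK Ha Hm Hp Hl n; induction n as [|n IH]; intros y z Hy Hz.
  - unfold q; simpl. replace (K*(1-1)) with 0 by ring. rewrite exp_0. lra.
  - pose proof (q_01 a Ha (S n)) as Q1. pose proof (q_01 a Ha n) as Q2.
    assert (Hq1: 0 <= q a 1 <= 1) by apply (q_01 a Ha).
    destruct (iter_in a Ha Hm n y Hy) as [y1 y2].
    destruct (iter_in a Ha Hm n z Hz) as [z1 z2].
    assert (Iy : 0 <= Nat.iter n a y <= 1) by lra.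
    assert (Iz : 0 <= Nat.iter n a z <= 1) by lra.
    simpl Pd.
    assert (Pz : 0 < Pd a da n z) by (apply Pd_pos; auto; lra).
    assert (Py : 0 < Pd a da n y) by (apply Pd_pos; auto; lra).
    pose proof (IH y z Hy Hz) as I.
    pose proof (Hl _ _ Iy Iz) as L.
    assert (E : Rabs (Nat.iter n a y - Nat.iter n a z) <= q a n - q a (S n)).
    { apply Rabs_le; lra. }
    assert (E2 : exp (K * Rabs (Nat.iter n a y - Nat.iter n a z)) <= exp (K * (q a n - q a (S n)))).
    { destruct (Req_dec (K * Rabs (Nat.iter n a y - Nat.iter n a z)) (K * (q a n - q a (S n)))) as [e|e].
      - rewrite e; lra.
      - left; apply exp_increasing. assert (K * Rabs (Nat.iter n a y - Nat.iter n a z) <= K * (q a n - q a (S n))) by (apply Rmult_le_compat_l; lra). lra. }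
    replace (K * (1 - q a (S n))) with (K * (q a n - q a (S n)) + K * (1 - q a n)) by ring.
    rewrite exp_plus.
    assert (Hdz : 0 < da (Nat.iter n a z)) by auto.
    assert (Hdy : 0 < da (Nat.iter n a y)) by auto.
    apply Rle_trans with (da (Nat.iter n a z) * exp (K * (q a n - q a (S n))) * (Pd a da n z * exp (K * (1 - q a n)))).
    + apply Rmult_le_compat; try lra.
      apply Rle_trans with (1 := L). apply Rmult_le_compat_l; lra.
    + right; ring.
Qed.


Lemma g_derive (a b da db : R -> R) (c : R) :
  (forall x, 0 <= x <= 1 -> 0 <= a x <= 1) ->
  (forall x, 0 <= x <= 1 -> is_derive a x (da x)) ->
  (forall x, 0 <= x <= 1 -> c <= b x <= 1) -> 0 <= c ->
  (forall x, 0 <= x <= 1 -> is_derive b x (db x)) ->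
  forall m y, 0 <= y <= 1 ->
   is_derive (g a b m) y (Pd a da (m-1) (b y) * db y) /\ 0 <= g a b m y <= 1.
Proof.
  intros Ha Hda Hb Hc Hdb m y Hy.
  assert (By : 0 <= b y <= 1) by (pose proof (Hb y Hy); lra).
  destruct (iter_derive a da Ha Hda (m-1) (b y) By) as [D1 R1].
  split; [|exact R1].
  unfold g. pose proof (is_derive_comp (Nat.iter (m-1) a) b y _ _ D1 (Hdb y Hy)) as H.
  unfold scal in H; simpl in H; unfold mult in H; simpl in H.
  rewrite Rmult_comm. exact H.
Qed.

Lemma Pd_le_da (a da : R -> R) :
  (forall x, 0 <= x <= 1 -> 0 <= a x <= 1) ->
  (forall x, 0 <= x <= 1 -> 0 < da x <= 1) ->
  forall k y, 0 <= y <= 1 -> Pd a da (S k) y <= da y.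
Proof.
  intros Ha Hd k; induction k as [|k IH]; intros y Hy.
  - simpl; lra.
  - change (Pd a da (S (S k)) y) with (da (Nat.iter (S k) a y) * Pd a da (S k) y).
    pose proof (Hd _ (iter_01 a Ha (S k) y Hy)).
    pose proof (Pd_bounds a da Ha Hd (S k) y Hy).
    specialize (IH y Hy).
    apply Rle_trans with (1 * Pd a da (S k) y); [apply Rmult_le_compat_r|]; lra.
Qed.

Lemma factor_bounds (a b da db : R -> R) (c th : R) :
  (forall x, 0 <= x <= 1 -> 0 <= a x <= 1) ->
  (forall x, 0 <= x <= 1 -> c <= b x <= 1) -> 0 < c ->
  (forall x, 0 <= x <= 1 -> 0 < da x <= 1) ->
  (forall x, 0 <= x <= 1 -> -1 <= db x < 0) ->
  (forall x, c <= x <= 1 -> da x <= th) ->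
  (forall x, c <= x <= 1 -> - db x <= th) ->
  forall m y, 0 <= y <= 1 ->
   Rabs (Pd a da (m-1) (b y) * db y) <= 1 /\
   ((2 <= m)%nat -> Rabs (Pd a da (m-1) (b y) * db y) <= th) /\
   (m = 1%nat -> c <= y <= 1 -> Rabs (Pd a da (m-1) (b y) * db y) <= th).
Proof.
  intros Ha Hb Hc Hda Hdb Ht1 Ht2 m y Hy.
  assert (By : 0 <= b y <= 1) by (pose proof (Hb y Hy); lra).
  pose proof (Pd_bounds a da Ha Hda (m-1) (b y) By) as P.
  pose proof (Hdb y Hy) as D.
  rewrite Rabs_mult, (Rabs_pos_eq (Pd _ _ _ _)) by lra.
  rewrite Rabs_left by lra.
  split; [|split].
  - replace 1 with (1*1) by ring. apply Rmult_le_compat; lra.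
  - intros Hm. replace (m-1)%nat with (S (m-2)) by lia.
    pose proof (Pd_le_da a da Ha Hda (m-2) (b y) By).
    pose proof (Ht1 (b y) (Hb y Hy)).
    pose proof (Pd_bounds a da Ha Hda (S (m-2)) (b y) By).
    apply Rle_trans with (Pd a da (S (m - 2)) (b y) * 1); [apply Rmult_le_compat_l|]; lra.
  - intros -> Hy2. simpl. pose proof (Ht2 y Hy2). lra.
Qed.


Lemma gcomp_bound (a b da db : R -> R) (c th : R) :
  (forall x, 0 <= x <= 1 -> 0 <= a x <= 1) ->
  (forall x, 0 <= x <= 1 -> is_derive a x (da x)) ->
  (forall x, 0 <= x <= 1 -> c <= b x <= 1) -> 0 < c ->
  (forall x, 0 <= x <= 1 -> is_derive b x (db x)) ->
  (forall x, 0 <= x <= 1 -> 0 < da x <= 1) ->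
  (forall x, 0 <= x <= 1 -> -1 <= db x < 0) ->
  (forall x, c <= x <= 1 -> da x <= th) ->
  (forall x, c <= x <= 1 -> - db x <= th) -> 0 <= th ->
  forall l, List.Forall (fun m => (1 <= m)%nat) l -> forall x, 0 <= x <= 1 ->
  exists D, is_derive (g_comp a b l) x D /\ Rabs D <= 1 /\ 0 <= g_comp a b l x <= 1 /\
   (match l with m :: _ => (2 <= m)%nat -> Rabs D <= th | nil => True end) /\
   (match l with m :: _ => m = 1%nat -> c <= g_comp a b l x | nil => True end) /\
   ((2 <= length l)%nat -> Rabs D <= th).
Proof.
  intros Ha Hda Hb Hc Hdb Hda' Hdb' Ht1 Ht2 Ht0 l; induction l as [|m l IH]; intros Hl x Hx.
  - exists 1. split; [|split; [|split; [|split; [|split]]]]; simpl; auto.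
    + apply (is_derive_ext (fun x => x)); [reflexivity|]. auto_derive; auto.
    + rewrite Rabs_R1; lra.
    + intros H; lia.
  - inversion Hl as [|? ? Hm Hl']; subst.
    destruct (IH Hl' x Hx) as (D' & HD & I1 & I2 & I3 & I4 & I5).
    set (x1 := g_comp a b l x) in *.
    destruct (g_derive a b da db c Ha Hda Hb (Rlt_le _ _ Hc) Hdb m x1 I2) as [G1 G2].
    destruct (factor_bounds a b da db c th Ha Hb Hc Hda' Hdb' Ht1 Ht2 m x1 I2) as (F1 & F2 & F3).
    set (F := Pd a da (m - 1) (b x1) * db x1) in *.
    exists (F * D').
    assert (Hder : is_derive (g_comp a b (m :: l)) x (F * D')).
    { simpl. apply (is_derive_ext (fun x => g a b m (g_comp a b l x))); [reflexivity|].
      pose proof (is_derive_comp (g a b m) (g_comp a b l) x _ _ G1 HD) as H.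
      unfold scal in H; simpl in H; unfold mult in H; simpl in H.
      rewrite Rmult_comm. exact H. }
    assert (Hval : g_comp a b (m :: l) x = g a b m x1) by reflexivity.
    pose proof (Rabs_pos F); pose proof (Rabs_pos D').
    split; [exact Hder|]. rewrite Hval, Rabs_mult.
    split; [replace 1 with (1*1) by ring; apply Rmult_le_compat; lra|].
    split; [exact G2|].
    split; [intros h; apply Rle_trans with (th * 1); [apply Rmult_le_compat; try lra; auto|lra]|].
    split.
    + intros ->. unfold g; simpl. pose proof (Hb x1 I2); lra.
    + intros Hlen. destruct (Nat.eq_dec m 1) as [e|e].
      * destruct l as [|m2 l2]; [simpl in Hlen; lia|].
        destruct (Nat.eq_dec m2 1) as [e2|e2].
        -- assert (c <= x1) by (apply I4; exact e2).
           assert (x1 <= 1) by lra.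
           apply Rle_trans with (th * 1); [apply Rmult_le_compat; try lra; apply F3; auto; lra|lra].
        -- inversion Hl' as [|? ? Hm2 _]; subst.
           assert (Rabs D' <= th) by (apply I3; lia).
           apply Rle_trans with (1 * th); [apply Rmult_le_compat; lra|lra].
      * apply Rle_trans with (th * 1); [apply Rmult_le_compat; try lra; apply F2; lia|lra].
Qed.


Lemma eta_le (a b da db : R -> R) (c th : R) :
  (forall x, 0 <= x <= 1 -> 0 <= a x <= 1) ->
  (forall x, 0 <= x <= 1 -> is_derive a x (da x)) ->
  (forall x, 0 <= x <= 1 -> c <= b x <= 1) -> 0 < c ->
  (forall x, 0 <= x <= 1 -> is_derive b x (db x)) ->
  (forall x, 0 <= x <= 1 -> 0 < da x <= 1) ->
  (forall x, 0 <= x <= 1 -> -1 <= db x < 0) ->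
  (forall x, c <= x <= 1 -> da x <= th) ->
  (forall x, c <= x <= 1 -> - db x <= th) -> 0 <= th ->
  forall n, (2 <= n)%nat -> Rbar_le (eta a b n) th.
Proof.
  intros Ha Hda Hb Hc Hdb Hda' Hdb' Ht1 Ht2 Ht0 n Hn.
  unfold eta. destruct (Lub_Rbar_correct (fun y => exists (l : list nat) (x : R),
    length l = n /\ List.Forall (fun m => (1 <= m)%nat) l /\
    0 <= x <= 1 /\ y = Rabs (Derive (g_comp a b l) x))) as [_ lub].
  apply lub. intros y (l & x & Hlen & Hf & Hx & ->).
  destruct (gcomp_bound a b da db c th Ha Hda Hb Hc Hdb Hda' Hdb' Ht1 Ht2 Ht0 l Hf x Hx)
    as (D0 & HD & _ & _ & _ & _ & I5).
  rewrite (is_derive_unique _ _ _ HD). simpl. apply I5; lia.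
Qed.

Lemma inf_le_elt (v : nat -> Rbar) (n : nat) (th : R) :
  Rbar_le (v n) th -> Rbar_le (Inf_seq v) th.
Proof.
  intros H. pose proof (Inf_seq_correct v) as C.
  destruct (Inf_seq v) as [l| |]; simpl in *; auto.
  - apply Rnot_lt_le; intros Hlt.
    assert (He : 0 < (l - th) / 2) by lra.
    destruct (C (mkposreal _ He)) as [C1 _]. specialize (C1 n).
    destruct (v n); simpl in *; lra.
  - specialize (C th n). destruct (v n); simpl in *; lra.
Qed.

Lemma limsup_lt (u : nat -> Rbar) (th : R) :
  th < 1 -> (forall n, (2 <= n)%nat -> Rbar_le (u n) th) -> Rbar_lt (Rbar_limsup u) 1.
Proof.
  intros Hth Hu. unfold Rbar_limsup.
  apply Rbar_le_lt_trans with (Finite th); [|simpl; lra].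
  apply (inf_le_elt _ 2).
  apply Rbar_le_trans with (Sup_seq (fun _ => Finite th)).
  + apply Sup_seq_le. intros n. apply Hu. lia.
  + rewrite (is_sup_seq_unique (fun _ => Finite th) th); [apply Rbar_le_refl|].
    intros eps. split; [intros _; simpl; destruct eps; simpl; lra|exists O; simpl; destruct eps; simpl; lra].
Qed.


Lemma exp_mono x y : x <= y -> exp x <= exp y.
Proof. intros [h|h]; [left; apply exp_increasing; auto|subst; lra]. Qed.

Lemma cond_c (a b da db : R -> R) (c K be : R) :
  0 <= K -> 0 < be -> 0 < c ->
  (forall x, 0 <= x <= 1 -> 0 <= a x <= 1) ->
  (forall x y, 0 <= x <= 1 -> 0 <= y <= 1 -> x <= y -> a x <= a y) ->
  (forall x, 0 <= x <= 1 -> 0 < da x <= 1) ->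
  (forall p r, 0 <= p <= 1 -> 0 <= r <= 1 -> da p <= da r * exp (K * Rabs (p - r))) ->
  (forall x, 0 <= x <= 1 -> is_derive a x (da x)) ->
  (forall x, 0 <= x <= 1 -> c <= b x <= 1) -> a 1 = c ->
  (forall x, 0 <= x <= 1 -> is_derive b x (db x)) ->
  (forall x, 0 <= x <= 1 -> -1 <= db x < 0) ->
  (forall x, 0 <= x <= 1 -> be <= - db x) ->
  exists L : R, 1 <= L /\
     forall (m : nat) (x y : R), (1 <= m)%nat -> 0 <= x <= 1 -> 0 <= y <= 1 ->
       / L <= Rabs (Derive (g a b m) x / Derive (g a b m) y) <= L.
Proof.
  intros HK Hbe Hc Ha Hm Hda Hl Hdera Hb Ha1 Hderb Hdb Hbe2.
  assert (Hq1 : q a 1 = c) by exact Ha1.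
  assert (Hbe1 : be <= 1) by (pose proof (Hbe2 0 ltac:(lra)); pose proof (Hdb 0 ltac:(lra)); lra).
  assert (EK : 1 <= exp K) by (rewrite <- exp_0; apply exp_mono; lra).
  assert (Hup : forall m x y, 0 <= x <= 1 -> 0 <= y <= 1 ->
     Rabs (Derive (g a b m) x / Derive (g a b m) y) <= exp K / be
     /\ Derive (g a b m) x <> 0).
  { intros m x y Hx Hy.
    destruct (g_derive a b da db c Ha Hdera Hb (Rlt_le _ _ Hc) Hderb m x Hx) as [Gx _].
    destruct (g_derive a b da db c Ha Hdera Hb (Rlt_le _ _ Hc) Hderb m y Hy) as [Gy _].
    rewrite (is_derive_unique _ _ _ Gx), (is_derive_unique _ _ _ Gy).
    pose proof (Hb x Hx) as Bx. pose proof (Hb y Hy) as By.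
    pose proof (Pd_pos a da Ha (fun z h => proj1 (Hda z h)) (m-1) (b x) ltac:(lra)) as Px.
    pose proof (Pd_pos a da Ha (fun z h => proj1 (Hda z h)) (m-1) (b y) ltac:(lra)) as Py.
    pose proof (distortion a da K HK Ha Hm (fun z h => proj1 (Hda z h)) Hl (m-1) (b x) (b y)
       ltac:(lra) ltac:(lra)) as Dst.
    pose proof (q_01 a Ha (m-1)) as Qm.
    assert (E1 : exp (K * (1 - q a (m - 1))) <= exp K).
    { apply exp_mono. assert (K * q a (m-1) >= 0) by (apply Rle_ge, Rmult_le_pos; lra). lra. }
    pose proof (Hdb x Hx); pose proof (Hdb y Hy); pose proof (Hbe2 y Hy).
    split.
    - unfold Rdiv. rewrite Rabs_mult, Rabs_inv, !Rabs_mult.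
      rewrite (Rabs_pos_eq (Pd _ _ _ (b x))), (Rabs_pos_eq (Pd _ _ _ (b y))) by lra.
      rewrite (Rabs_left (db x)), (Rabs_left (db y)) by lra.
      rewrite Rinv_mult.
      replace (Pd a da (m - 1) (b x) * - db x * (/ Pd a da (m - 1) (b y) * / - db y))
        with ((Pd a da (m - 1) (b x) / Pd a da (m - 1) (b y)) * (- db x / - db y)) by (field; lra).
      apply Rmult_le_compat.
      + apply Rlt_le, Rdiv_lt_0_compat; lra.
      + apply Rlt_le, Rdiv_lt_0_compat; lra.
      + apply Rle_div_l; [lra|]. rewrite Rmult_comm. apply Rle_trans with (1 := Dst).
        apply Rmult_le_compat_l; lra.
      + apply Rle_trans with (/ - db y).
        * unfold Rdiv. rewrite <- (Rmult_1_l (/ - db y)) at 2.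
          apply Rmult_le_compat_r; [left; apply Rinv_0_lt_compat|]; lra.
        * apply Rinv_le_contravar; lra.
    - apply Rmult_integral_contrapositive; split; lra. }
  assert (HL : 1 <= exp K / be).
  { apply Rle_div_r; lra. }
  exists (exp K / be). split; [exact HL|].
  intros m x y _ Hx Hy.
  destruct (Hup m x y Hx Hy) as [U1 N1].
  destruct (Hup m y x Hy Hx) as [U2 N2].
  split; [|exact U1].
  assert (Hpos : 0 < Rabs (Derive (g a b m) y / Derive (g a b m) x)).
  { apply Rabs_pos_lt. unfold Rdiv. apply Rmult_integral_contrapositive; split; auto.
    apply Rinv_neq_0_compat; auto. }
  replace (Rabs (Derive (g a b m) x / Derive (g a b m) y))
    with (/ Rabs (Derive (g a b m) y / Derive (g a b m) x)).
  - apply Rinv_le_contravar; lra.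
  - rewrite <- Rabs_inv. f_equal. field. split; auto.
Qed.


Lemma sqrt_tele (x y : R) : 0 <= y -> y <= x -> 0 < x ->
  (x - y) / sqrt x <= 2 * (sqrt x - sqrt y).
Proof.
  intros Hy Hyx Hx.
  pose proof (sqrt_lt_R0 x Hx) as Sx. pose proof (sqrt_pos y) as Sy.
  pose proof (sqrt_le_1_alt _ _ Hyx) as Sxy.
  apply Rle_div_l; [lra|].
  rewrite <- (sqrt_sqrt x) at 1 by lra. rewrite <- (sqrt_sqrt y) at 1 by lra.
  nra.
Qed.

Lemma term_bound (w qk B s : R) (P : nat) :
  (1 <= P)%nat -> 0 < B -> 0 < qk -> B * qk ^ P <= w ->
  s = 1 - / (2 * INR P) ->
  Rpower w s <= exp ((s - 1) * ln B) * (w / sqrt qk).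
Proof.
  intros HP HB Hq Hw Hs.
  assert (HINR : 1 <= INR P) by (apply (le_INR 1); lia).
  assert (Hw0 : 0 < w) by (pose proof (pow_lt qk P Hq); nra).
  assert (Hs1 : s - 1 < 0) by (subst; assert (0 < / (2 * INR P)) by (apply Rinv_0_lt_compat; lra); lra).
  unfold Rpower.
  assert (Hl : ln B + INR P * ln qk <= ln w).
  { rewrite <- ln_pow by lra. rewrite <- ln_mult by (try apply pow_lt; lra). apply ln_le; auto.
    apply Rmult_lt_0_compat; [lra|apply pow_lt; lra]. }
  replace (s * ln w) with (ln w + (s - 1) * ln w) by ring.
  rewrite exp_plus, exp_ln by lra.
  assert (E : (s - 1) * ln w <= (s - 1) * ln B + (- / 2) * ln qk).
  { replace ((- / 2) * ln qk) with ((s - 1) * (INR P * ln qk)).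
    - rewrite <- Rmult_plus_distr_l. apply Rmult_le_compat_neg_l; lra.
    - subst s. field. lra. }
  apply Rle_trans with (w * exp ((s - 1) * ln B + (- / 2) * ln qk)).
  - apply Rmult_le_compat_l; [lra|]. destruct E as [E|E]; [left; apply exp_increasing; auto|rewrite E; lra].
  - rewrite exp_plus. replace (- / 2 * ln qk) with (- (/ 2 * ln qk)) by ring.
    rewrite exp_Ropp. change (exp (/ 2 * ln qk)) with (Rpower qk (/ 2)).
    rewrite Rpower_sqrt by lra. right; unfold Rdiv; ring.
Qed.

Lemma tele_series (r : nat -> R) (C : R) : 0 <= C ->
  (forall n, 0 <= r (S n) <= r n) ->
  ex_series (fun n => C * (sqrt (r n) - sqrt (r (S n)))).
Proof.
  intros HC Hr.
  assert (Hs : forall n, sum_n (fun n => C * (sqrt (r n) - sqrt (r (S n)))) n = C * (sqrt (r O) - sqrt (r (S n)))).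
  { induction n. - rewrite sum_O. reflexivity.
    - rewrite sum_Sn, IHn. unfold plus; simpl. ring. }
  assert (Hb : forall n, 0 <= C * (sqrt (r n) - sqrt (r (S n)))).
  { intros n. apply Rmult_le_pos; auto. pose proof (sqrt_le_1_alt _ _ (proj2 (Hr n))). lra. }
  destruct (ex_finite_lim_seq_incr (sum_n (fun n => C * (sqrt (r n) - sqrt (r (S n))))) (C * sqrt (r O))) as [l Hl].
  - intros n. rewrite sum_Sn. unfold plus; simpl. pose proof (Hb (S n)). lra.
  - intros n. rewrite Hs. pose proof (sqrt_pos (r (S n))). nra.
  - exists l. exact Hl.
Qed.

Lemma abscissa_lt (a u : R -> R) (B x1 : R) (P : nat) :
  (1 <= P)%nat -> 0 < B -> 0 < x1 <= 1 ->
  (forall x, 0 <= x <= 1 -> 0 <= a x <= 1) ->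
  (forall x, 0 < x <= 1 -> 0 < a x) ->
  (forall x, 0 <= x <= 1 -> a x = x - u x) ->
  (forall x, 0 <= x <= x1 -> B * x ^ P <= u x) ->
  (forall x y, 0 <= x -> x <= y -> y <= 1 -> u x <= u y) ->
  Rbar_lt (abscissa_J a) 1.
Proof.
  intros HP HB Hx1 Ha Hapos Hau Hlow Hmon.
  pose proof (q_01 a Ha) as Q.
  assert (Qpos : forall k, 0 < q a k).
  { induction k; [unfold q; simpl; lra|rewrite q_S; apply Hapos; pose proof (Q k); lra]. }
  assert (U0 : forall x, 0 <= x <= 1 -> 0 <= u x).
  { intros x Hx. pose proof (Hlow 0 ltac:(lra)). pose proof (pow_le 0 P ltac:(lra)).
    pose proof (Hmon 0 x ltac:(lra) ltac:(lra) ltac:(lra)). nra. }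
  assert (QS : forall k, q a (S k) = q a k - u (q a k)) by (intros k; rewrite q_S; apply Hau, Q).
  assert (Dec : forall k, q a (S k) <= q a k) by (intros k; rewrite QS; pose proof (U0 _ (Q k)); lra).
  set (d := B * x1 ^ P).
  assert (Hd : 0 < d) by (apply Rmult_lt_0_compat; [lra|apply pow_lt; lra]).
  assert (HK : exists K, q a K <= x1).
  { destruct (Classical_Prop.classic (exists K, q a K <= x1)) as [h|h]; auto. exfalso.
    assert (All : forall k, x1 < q a k) by (intros k; apply Rnot_le_lt; intros H; apply h; exists k; auto).
    assert (Lin : forall k, q a k <= 1 - INR k * d).
    { induction k. - unfold q; simpl; lra.
      - rewrite QS, S_INR. pose proof (All k). pose proof (Q k).
        pose proof (Hlow x1 ltac:(lra)). pose proof (Hmon x1 (q a k) ltac:(lra) ltac:(lra) ltac:(lra)).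
        unfold d in *. lra. }
    destruct (nfloor_ex (/ d)) as [N HN]; [left; apply Rinv_0_lt_compat; auto|].
    pose proof (Lin (S N)) as L1. pose proof (Qpos (S N)). rewrite S_INR in L1.
    assert (/ d * d = 1) by (field; lra).
    assert ((INR N + 1) * d > 1) by nra. lra. }
  destruct HK as [K HK].
  assert (Small : forall k, q a (K + k) <= x1).
  { induction k; [rewrite Nat.add_0_r; auto|]. rewrite Nat.add_succ_r. pose proof (Dec (K + k)%nat); lra. }
  set (s := 1 - / (2 * INR P)).
  assert (Hs1 : s < 1).
  { unfold s. assert (1 <= INR P) by (apply (le_INR 1); lia).
    assert (0 < / (2 * INR P)) by (apply Rinv_0_lt_compat; lra). lra. }
  assert (Hex : ex_series (fun k => Rpower (J_len a (S k)) s)).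
  { apply (ex_series_incr_n _ K).
    apply (@ex_series_le R_AbsRing R_CompleteNormedModule _ (fun k => (exp ((s - 1) * ln B) * 2) *
         (sqrt (q a (K + k)) - sqrt (q a (S (K + k)))))).
    - intros k. unfold J_len. replace (S (K + k) - 1)%nat with (K + k)%nat by lia.
      rewrite QS. replace (q a (K + k) - (q a (K + k) - u (q a (K + k)))) with (u (q a (K + k))) by ring.
      change (norm (Rpower (u (q a (K + k))) s)) with (Rabs (Rpower (u (q a (K + k))) s)).
      rewrite Rabs_pos_eq by (unfold Rpower; left; apply exp_pos).
      pose proof (Qpos (K + k)%nat) as Qp. pose proof (Small k) as Sm.
      eapply Rle_trans.
      + apply (term_bound _ (q a (K + k)) B s P); auto. apply Hlow; lra.
      + rewrite Rmult_assoc. apply Rmult_le_compat_l; [left; apply exp_pos|].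
        pose proof (sqrt_tele (q a (K + k)) (q a (S (K + k)))) as T.
        rewrite QS in T.
        replace (q a (K + k) - (q a (K + k) - u (q a (K + k)))) with (u (q a (K + k))) in T by ring.
        apply T; try lra.
        * rewrite <- QS. apply Q.
        * pose proof (U0 _ (Q (K + k)%nat)); lra.
    - eapply ex_series_ext; [|apply (tele_series (fun k => q a (K + k)) (exp ((s - 1) * ln B) * 2))].
      + intros n. simpl. rewrite Nat.add_succ_r. reflexivity.
      + left; apply Rmult_lt_0_compat; [apply exp_pos|lra].
      + intros n. rewrite Nat.add_succ_r. split; [apply Q|apply Dec]. }
  unfold abscissa_J. destruct (Glb_Rbar_correct (fun s => ex_series (fun k => Rpower (J_len a (S k)) s))) as [lb _].
  apply Rbar_le_lt_trans with (Finite s); [apply lb; exact Hex|simpl; exact Hs1].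
Qed.


Lemma derive_cont_pt f x l : is_derive f x l -> continuity_pt f x.
Proof.
  intros H. apply continuity_pt_filterlim. apply (ex_derive_continuous f x). exists l; exact H.
Qed.

Lemma mvt_ex f df lo hi : lo <= hi ->
  (forall x, lo <= x <= hi -> is_derive f x (df x)) ->
  exists xi, lo <= xi <= hi /\ f hi - f lo = df xi * (hi - lo).
Proof.
  intros Hle Hd.
  destruct (MVT_gen f lo hi df) as [xi [H1 H2]].
  - intros x Hx. rewrite Rmin_left, Rmax_right in Hx by lra. apply Hd; lra.
  - intros x Hx. rewrite Rmin_left, Rmax_right in Hx by lra. apply (derive_cont_pt f x (df x)); apply Hd; lra.
  - rewrite Rmin_left, Rmax_right in H1 by lra. exists xi; auto.
Qed.

Lemma cont_eps f x : continuity_pt f x -> forall eps, 0 < eps ->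
  exists del, 0 < del /\ forall y, Rabs (y - x) < del -> Rabs (f y - f x) < eps.
Proof.
  intros H eps He. destruct (H eps He) as [del [Hd Hy]].
  exists del; split; auto. intros y Hyx.
  destruct (Req_dec y x) as [->|Hne]; [rewrite Rminus_eq_0, Rabs_R0; auto|].
  apply (Hy y). split; [split; [exact I|auto]|]. exact Hyx.
Qed.

Lemma at_right0_ev (P : R -> Prop) : at_right 0 P -> exists del, 0 < del /\ forall y, 0 < y < del -> P y.
Proof.
  intros [del Hd]. exists del. split; [apply cond_pos|]. intros y Hy. apply Hd; [|lra].
  unfold ball; simpl; unfold AbsRing_ball, abs, minus, plus, opp; simpl.
  rewrite Ropp_0, Rplus_0_r, Rabs_pos_eq; lra.
Qed.


Lemma exp_mono' x y : x <= y -> exp x <= exp y.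
Proof. intros [h|h]; [left; apply exp_increasing; auto|subst; lra]. Qed.

Lemma u_lower (u V : R -> R) (gamma : R) : 0 < gamma ->
  C2_on_01 u -> u 0 = 0 -> Derive u 0 = 0 -> SV0_star V ->
  (forall x, 0 < x <= 1 -> Derive u x = Rpower x gamma * V x) ->
  exists B x1 P, (1 <= P)%nat /\ 0 < B /\ 0 < x1 <= 1 /\
     forall x, 0 <= x <= x1 -> B * x ^ P <= u x.
Proof.
  intros Hg [eu [Heu Hu]] Hu0 Hdu0 [Vpos [[eV [HeV HV]] [_ Hlim]]] Hdu.
  pose proof (proj1 (@filterlim_locally R R_UniformSpace (at_right 0) _ _ 0) Hlim (mkposreal 1 Rlt_0_1)) as Hlim2. clear Hlim. rename Hlim2 into Hlim.
  apply at_right0_ev in Hlim. destruct Hlim as [del [Hdel Hball]].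
  set (x1 := Rmin (del / 2) (1 / 2)).
  assert (Hx1 : 0 < x1 <= 1 / 2) by (unfold x1; split; [apply Rmin_glb_lt; lra|apply Rmin_r]).
  assert (Hx1d : x1 < del) by (unfold x1; pose proof (Rmin_l (del/2) (1/2)); lra).
  assert (Hr : forall y, 0 < y <= x1 -> y * Derive V y < V y).
  { intros y Hy. specialize (Hball y ltac:(lra)). simpl in Hball.
    unfold ball in Hball; simpl in Hball; unfold AbsRing_ball, abs, minus, plus, opp in Hball; simpl in Hball.
    rewrite Ropp_0, Rplus_0_r in Hball. apply Rabs_def2 in Hball.
    pose proof (Vpos y ltac:(lra)).
    destruct Hball as [Hb _]. apply (Rmult_lt_compat_r (V y)) in Hb; auto.
    unfold Rdiv in Hb. rewrite Rmult_assoc, Rinv_l, Rmult_1_r, Rmult_1_l in Hb by lra. exact Hb. }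
  set (C0 := V x1 / x1).
  assert (HC0 : 0 < C0) by (unfold C0; apply Rdiv_lt_0_compat; [apply Vpos|]; lra).
  assert (HVlow : forall t, 0 < t <= x1 -> C0 * t <= V t).
  { intros t Ht.
    destruct (mvt_ex (fun y => V y / y) (fun y => (Derive V y * y - V y * 1) / y ^ 2) t x1) as [xi [Hxi Heq]].
    - lra.
    - intros y Hy. apply is_derive_div.
      + apply Derive_correct. apply (HV y). lra.
      + auto_derive; auto.
      + lra.
    - assert (Hd : (Derive V xi * xi - V xi * 1) / xi ^ 2 <= 0).
      { pose proof (Hr xi ltac:(lra)). unfold Rdiv. apply Rmult_le_0_r; [lra|].
        left; apply Rinv_0_lt_compat, pow_lt; lra. }
      set (D := (Derive V xi * xi - V xi * 1) / xi ^ 2) in *.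
      assert (D * (x1 - t) <= 0) by nra.
      assert (V x1 / x1 <= V t / t) by lra.
      unfold C0. apply (Rmult_le_reg_r (/ t)); [apply Rinv_0_lt_compat; lra|].
      replace (V x1 / x1 * t * / t) with (V x1 / x1) by (field; lra). exact H0. }
  destruct (nfloor_ex gamma) as [N0 HN0]; [lra|].
  set (N := S N0).
  assert (HN : gamma <= INR N) by (unfold N; rewrite S_INR; lra).
  assert (Hdulow : forall t, 0 <= t <= x1 -> C0 * t ^ (S N) <= Derive u t).
  { intros t Ht. destruct (Req_dec t 0) as [->|Hne].
    - rewrite Hdu0. simpl. lra.
    - assert (Htp : 0 < t) by (destruct (proj1 Ht) as [h|h]; [auto|congruence]).
      rewrite Hdu by lra.
      assert (E1 : t ^ N <= Rpower t gamma).
      { rewrite <- Rpower_pow by lra. unfold Rpower. apply exp_mono'.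
        assert (ln t <= 0) by (rewrite <- ln_1; apply ln_le; lra). nra. }
      pose proof (HVlow t ltac:(lra)).
      assert (0 <= t ^ N) by (apply pow_le; lra).
      replace (C0 * t ^ S N) with (t ^ N * (C0 * t)) by (simpl; ring).
      apply Rmult_le_compat; auto; nra. }
  set (P := S (S N)).
  exists (C0 / INR P), x1, P. split; [unfold P; lia|]. split.
  { apply Rdiv_lt_0_compat; auto. apply lt_0_INR. unfold P; lia. }
  split; [lra|].
  intros x Hx.
  destruct (mvt_ex (fun y => u y - C0 / INR P * y ^ P)
     (fun y => Derive u y - C0 / INR P * (INR P * 1 * y ^ Init.Nat.pred P)) 0 x) as [xi [Hxi Heq]].
  - lra.
  - intros y Hy. apply (is_derive_minus u (fun y => C0 / INR P * y ^ P)).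
    + apply Derive_correct. apply (Hu y). lra.
    + apply (is_derive_scal (fun y => y ^ P)). apply (is_derive_pow (fun y => y)). auto_derive; auto.
  - assert (HP0 : INR P <> 0) by (apply not_0_INR; unfold P; lia).
    replace (C0 / INR P * (INR P * 1 * xi ^ Init.Nat.pred P)) with (C0 * xi ^ S N) in Heq
      by (unfold P; simpl; field; auto).
    pose proof (Hdulow xi ltac:(lra)).
    rewrite Hu0 in Heq. replace (0 ^ P) with 0 in Heq by (unfold P; simpl; ring).
    assert (0 <= (Derive u xi - C0 * xi ^ S N) * (x - 0)) by (apply Rmult_le_pos; lra).
    lra.
Qed.


Theorem theorem7p1 (gamma c : R) (a b : R -> R) :
  0 < gamma -> is_DRIS gamma c a b ->
  good_class a b /\ is_DRBGC c a b.
Proof.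
  intros Hg [HDRI Hex].
  assert (HDRI' := HDRI). destruct HDRI' as [HDR Hda0].
  destruct HDR as (Hc & [ea [Hea Ha2]] & [eb [Heb Hb2]] & [Ha01 _] & [Hb01 _] & Hamono & Hbmono
     & Ha0 & Ha1 & Hb0 & Hb1 & Hsign & Hlt1).
  destruct Hex as (u & V & Hau & Hu2 & Hu0 & Hdu0 & Hdu01 & HV & Hdu).
  set (da := Derive a). set (db := Derive b).
  assert (Hdera : forall x, 0 <= x <= 1 -> is_derive a x (da x)).
  { intros x Hx. apply Derive_correct. apply (Ha2 x). lra. }
  assert (Hderb : forall x, 0 <= x <= 1 -> is_derive b x (db x)).
  { intros x Hx. apply Derive_correct. apply (Hb2 x). lra. }
  assert (Ha : forall x, 0 <= x <= 1 -> 0 <= a x <= 1) by (intros x Hx; pose proof (Ha01 x Hx); lra).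
  assert (Hb : forall x, 0 <= x <= 1 -> c <= b x <= 1) by (intros x Hx; apply Hb01; auto).
  assert (Hm : forall x y, 0 <= x <= 1 -> 0 <= y <= 1 -> x <= y -> a x <= a y).
  { intros x y Hx Hy [h|h]; [left; apply Hamono; auto|subst; lra]. }
  assert (Hapos : forall x, 0 < x <= 1 -> 0 < a x).
  { intros x Hx. rewrite <- Ha0. apply Hamono; lra. }
  assert (Cda : forall x, 0 <= x <= 1 -> continuity_pt da x).
  { intros x Hx. apply (derive_cont_pt _ _ (Derive (Derive a) x)). apply Derive_correct. apply (Ha2 x). lra. }
  assert (Cdb : forall x, 0 <= x <= 1 -> continuity_pt db x).
  { intros x Hx. apply (derive_cont_pt _ _ (Derive (Derive b) x)). apply Derive_correct. apply (Hb2 x). lra. }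
  assert (Hda' : forall x, 0 <= x <= 1 -> 0 < da x <= 1).
  { intros x Hx. destruct (Req_dec x 0) as [->|h].
    - unfold da; rewrite Hda0; lra.
    - pose proof (Hsign x Hx). pose proof (Hlt1 x ltac:(lra)). unfold da; lra. }
  assert (Hdb0 : -1 <= db 0).
  { apply Rnot_lt_le; intros Hlt.
    destruct (cont_eps db 0 (Cdb 0 ltac:(lra)) (-1 - db 0) ltac:(lra)) as [del [Hdel Hd]].
    set (y := Rmin (del / 2) 1).
    assert (Hy : 0 < y <= 1) by (unfold y; split; [apply Rmin_glb_lt; lra|apply Rmin_r]).
    assert (Hy2 : y <= del / 2) by apply Rmin_l.
    specialize (Hd y ltac:(rewrite Rminus_0_r, Rabs_pos_eq; lra)).
    pose proof (Hlt1 y Hy). apply Rabs_def2 in Hd. unfold db in *; lra. }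
  assert (Hdb' : forall x, 0 <= x <= 1 -> -1 <= db x < 0).
  { intros x Hx. destruct (Req_dec x 0) as [->|h].
    - pose proof (Hsign 0 ltac:(lra)). unfold db in *; lra.
    - pose proof (Hsign x Hx). pose proof (Hlt1 x ltac:(lra)). unfold db; lra. }
  destruct (continuity_ab_min da 0 1 ltac:(lra) Cda) as [xal [Hal1 Hal2]].
  set (al := da xal). assert (Hal : 0 < al) by (apply Hda'; auto).
  assert (Cdda : forall x, 0 <= x <= 1 -> continuity_pt (fun x => Rabs (Derive (Derive a) x)) x).
  { intros x Hx. apply (continuity_pt_comp (Derive (Derive a)) Rabs).
    - apply continuity_pt_filterlim. apply (Ha2 x). lra.
    - apply Rcontinuity_abs. }
  destruct (continuity_ab_maj _ 0 1 ltac:(lra) Cdda) as [xM [HM1 HM2]].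
  set (M := Rabs (Derive (Derive a) xM)).
  assert (HM0 : 0 <= M) by apply Rabs_pos.
  assert (Lip : forall p r, 0 <= p <= 1 -> 0 <= r <= 1 -> Rabs (da p - da r) <= M * Rabs (p - r)).
  { assert (L1 : forall lo hi, 0 <= lo -> lo <= hi -> hi <= 1 -> Rabs (da hi - da lo) <= M * (hi - lo)).
    { intros lo hi H1 H2 H3.
      destruct (mvt_ex da (Derive (Derive a)) lo hi H2) as [xi [Hxi Heq]].
      - intros x Hx. apply Derive_correct. apply (Ha2 x). lra.
      - rewrite Heq, Rabs_mult, (Rabs_pos_eq (hi - lo)) by lra.
        apply Rmult_le_compat_r; [lra|]. apply HM1; lra. }
    intros p r Hp Hr. destruct (Rle_dec r p) as [h|h].
    - rewrite (Rabs_pos_eq (p - r)) by lra. apply L1; lra.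
    - rewrite Rabs_minus_sym, (Rabs_minus_sym p r), (Rabs_pos_eq (r - p)) by lra. apply L1; lra. }
  set (K := M / al).
  assert (HK : 0 <= K) by (unfold K; apply Rmult_le_pos; [lra|left; apply Rinv_0_lt_compat; lra]).
  assert (Hl : forall p r, 0 <= p <= 1 -> 0 <= r <= 1 -> da p <= da r * exp (K * Rabs (p - r))).
  { intros p r Hp Hr.
    pose proof (Lip p r Hp Hr) as L0. assert (L : da p - da r <= M * Rabs (p - r)) by (eapply Rle_trans; [apply Rle_abs|exact L0]).
    pose proof (Hal1 r Hr) as Ar. fold al in Ar.
    pose proof (Rabs_pos (p - r)).
    assert (M = K * al) by (unfold K; field; lra).
    apply Rle_trans with (da r * (1 + K * Rabs (p - r))).
    - assert (M * Rabs (p - r) <= da r * K * Rabs (p - r)).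
      { rewrite H0. rewrite (Rmult_comm K al). rewrite !Rmult_assoc.
        apply Rmult_le_compat_r; [apply Rmult_le_pos; lra|auto]. }
      nra.
    - apply Rmult_le_compat_l; [pose proof (Hda' r Hr); lra|]. apply exp_ineq1_le. }
  assert (Cda' : forall x, c <= x <= 1 -> continuity_pt da x) by (intros x Hx; apply Cda; lra).
  assert (Cdb' : forall x, c <= x <= 1 -> continuity_pt db x) by (intros x Hx; apply Cdb; lra).
  destruct (continuity_ab_maj da c 1 ltac:(lra) Cda') as [xa [Hxa1 Hxa2]].
  destruct (continuity_ab_min db c 1 ltac:(lra) Cdb') as [xb [Hxb1 Hxb2]].
  assert (Tha : da xa < 1) by (apply (Hlt1 xa); lra).
  assert (Thb : - db xb < 1) by (pose proof (Hlt1 xb ltac:(lra)); unfold db; lra).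
  set (th := Rmax (da xa) (- db xb)).
  assert (Hth1 : th < 1) by (unfold th; apply Rmax_lub_lt; auto).
  assert (Hth0 : 0 <= th) by (unfold th; pose proof (Hda' xa ltac:(lra)); pose proof (Rmax_l (da xa) (- db xb)); lra).
  assert (Ht1 : forall x, c <= x <= 1 -> da x <= th).
  { intros x Hx. apply Rle_trans with (da xa); [apply Hxa1; auto|apply Rmax_l]. }
  assert (Ht2 : forall x, c <= x <= 1 -> - db x <= th).
  { intros x Hx. apply Rle_trans with (- db xb); [pose proof (Hxb1 x Hx); lra|apply Rmax_r]. }
  destruct (continuity_ab_maj db 0 1 ltac:(lra) Cdb) as [xbe [Hbe1 Hbe2]].
  assert (Hbe : 0 < - db xbe) by (pose proof (Hdb' xbe Hbe2); lra).
  assert (Hbe' : forall x, 0 <= x <= 1 -> - db xbe <= - db x) by (intros x Hx; pose proof (Hbe1 x Hx); lra).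
  assert (Hc0 : 0 < c) by lra.
  assert (good : good_class a b).
  { split; [|split].
    - destruct (u_lower u V gamma Hg Hu2 Hu0 Hdu0 HV Hdu) as (B & x1 & P & HP & HB & Hx1 & Hlow).
      apply (abscissa_lt a u B x1 P HP HB Hx1 Ha Hapos Hau Hlow).
      intros x y H1 H2 H3. destruct Hu2 as [eu [Heu Hu]].
      destruct (mvt_ex u (Derive u) x y H2) as [xi [Hxi Heq]].
      + intros z Hz. apply Derive_correct. apply (Hu z). lra.
      + pose proof (Hdu01 xi ltac:(lra)). assert (0 <= Derive u xi * (y - x)) by (apply Rmult_le_pos; lra). lra.
    - apply (limsup_lt _ th Hth1).
      apply (eta_le a b da db c th Ha Hdera Hb Hc0 Hderb Hda' Hdb' Ht1 Ht2 Hth0).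
    - apply (cond_c a b da db c K (- db xbe) HK Hbe Hc0 Ha Hm Hda' Hl Hdera Hb Ha1 Hderb Hdb' Hbe'). }
  split; [exact good|split; [exact HDRI|exact good]].
Qed.
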